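(* Let $I$ be a resident-minimal and hospital-complete instance and suppose there is a prescription $(P,X)$ for $I$. Then there is a simple extension $J$ of $I$ such that $\mathrm{prop}(J)\setminus\mathrm{prop}(I)\subseteq P$, $\mathrm{rej}(J)\setminus\mathrm{rej}(I)\subseteq X$, and $\mathrm{tgs}(P,X)\subseteq\mathrm{rej}(J)$.
   Context: An instance $I$ consists of finite disjoint sets $R$ (residents) and $H$ (hospitals), a positive integer quota $q_h$ for each $h\in H$, for each $r\in R$ a preference list of $r$ (a sequence of distinct members of $H$, not necessarily all), and for each $h\in H$ a preference list of $h$ (a sequence of distinct members of $R$). A list is complete if it contains every member of the opposite side; an instance is hospital-complete if every hospital's list is complete. A match is a pair $(r,h)\in R\times H$. For a set $M$ of matches, $\mathrm{res}_h M=\{r:(r,h)\in M\}$, $\mathrm{res}\,M=\{r:(r,h)\in M\text{ for some }h\}$. $J$ is an extension of $I$ (same $R,H$, quotas) if every list of $J$ has the corresponding list of $I$ as a prefix. An event is $(r,h)^+$ (proposal) or $(r,h)^-$ (rejection). For an event sequence $\sigma$, $\mathrm{prop}(\sigma)$, $\mathrm{rej}(\sigma)$ are the sets of matches proposed/rejected in $\sigma$ and $\mathrm{tent}(\sigma)=\mathrm{prop}(\sigma)\setminus\mathrm{rej}(\sigma)$. A match $(r,h)\in M$ is ousted from $M$ in $I$ if the list of $h$ in $I$ contains at least $q_h$ residents of $\mathrm{res}_h M$ and either $r$ is not on it or $r$ is preceded on it by at least $q_h$ residents of $\mathrm{res}_h M$. $I$-feasible sequences: the empty sequence is $I$-feasible;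 if $\sigma$ is $I$-feasible then $\sigma+(r,h)^+$ is $I$-feasible if $r\notin\mathrm{res}\,\mathrm{tent}(\sigma)$, $(r,h)\notin\mathrm{prop}(\sigma)$, $h$ is on the list of $r$ in $I$ and $(r,h')\in\mathrm{rej}(\sigma)$ for every $h'$ preceding $h$ on it; and $\sigma+(r,h)^-$ is $I$-feasible if $(r,h)$ is ousted from $\mathrm{prop}(\sigma)$ in $I$ and $(r,h)\notin\mathrm{rej}(\sigma)$. All maximal $I$-feasible sequences contain the same events; $\mathrm{prop}(I),\mathrm{rej}(I),\mathrm{tent}(I)$ denote $\mathrm{prop}(\sigma),\mathrm{rej}(\sigma),\mathrm{tent}(\sigma)$ for any maximal $I$-feasible $\sigma$. $I$ is resident-minimal if $\mathrm{prop}(I)$ equals the set of matches $(r,h)$ with $h$ on the list of $r$ in $I$. An extension $J$ of $I$ is simple if $(\mathrm{prop}(J)\setminus\mathrm{prop}(I))\cap(\mathrm{rej}(J)\setminus\mathrm{rej}(I))=\emptyset$. For a resident-minimal and hospital-complete instance $I$, a prescription for $I$ is a pair $(P,X)$ of sets of matches such that: (P1) $P\cap\mathrm{prop}(I)=\emptyset$; (P2) for each $r\in R$ there is at most one $h$ with $(r,h)\in P$; (P3) $X\subseteq\mathrm{tent}(I)$; (P4) $\mathrm{res}\,P\cap\mathrm{res}\,\mathrm{tent}(I)\subseteq\mathrm{res}\,X$; (P5) for each $h\in H$, $|\mathrm{res}_h(P\cup(\mathrm{tent}(I)\setminus X))|\le q_h$, with equality if $\mathrm{res}_h X\neq\emptyset$;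 (P6) for each $h\in H$, every member of $\mathrm{res}_h(P\cup(\mathrm{tent}(I)\setminus X))$ precedes all members of $\mathrm{res}_h X$ in the list of $h$ in $I$. Its target set is $\mathrm{tgs}(P,X)=\{(r,h)\in X: r\notin\mathrm{res}\,P\}$. *)

(* Defs.v *)
From mathcomp Require Import all_boot.
From Stdlib Require Import ClassicalEpsilon.

Set Implicit Arguments.
Unset Strict Implicit.
Unset Printing Implicit Defensive.

Section HR.
Variables (R H : finType).

Record instance := Instance {
  quota : H -> nat;
  rlist : R -> seq H;
  hlist : H -> seq R }.

Definition valid_instance (I : instance) : Prop :=
  (forall h, 0 < quota I h) /\ (forall r, uniq (rlist I r)) /\
  (forall h, uniq (hlist I h)).

Definition match_t := (R * H)%type.

Definition precedes (T : eqType) (x y : T) (s : seq T) : bool :=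
  (x \in s) && (index x s < index y s).

Definition hospital_complete (I : instance) : Prop :=
  forall h r, r \in hlist I h.

Definition extension (I J : instance) : Prop :=
  (forall h, quota J h = quota I h) /\
  (forall r, prefix (rlist I r) (rlist J r)) /\
  (forall h, prefix (hlist I h) (hlist J h)).

Definition res_h (M : {set match_t}) (h : H) : {set R} := [set r | (r, h) \in M].
Definition res (M : {set match_t}) : {set R} := [set m.1 | m in M].

(* events: (true, m) = proposal m^+, (false, m) = rejection m^- *)
Definition event := (bool * match_t)%type.

Definition propS (s : seq event) : {set match_t} := [set m | (true, m) \in s].
Definition rejS (s : seq event) : {set match_t} := [set m | (false, m) \in s].
Definition tentS (s : seq event) : {set match_t} := propS s :\: rejS s.

Definition ousted (I : instance) (M : {set match_t}) (r : R) (h : H) : bool :=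
  [&& (r, h) \in M,
      quota I h <= count (fun r' => r' \in res_h M h) (hlist I h) &
      (r \notin hlist I h) ||
      (quota I h <= count (fun r' => r' \in res_h M h)
                          (take (index r (hlist I h)) (hlist I h)))].

Inductive feasible (I : instance) : seq event -> Prop :=
| feas_nil : feasible I [::]
| feas_prop s r h :
    feasible I s ->
    r \notin res (tentS s) ->
    (r, h) \notin propS s ->
    h \in rlist I r ->
    (forall h', precedes h' h (rlist I r) -> (r, h') \in rejS s) ->
    feasible I (rcons s (true, (r, h)))
| feas_rej s r h :
    feasible I s ->
    ousted I (propS s) r h ->
    (r, h) \notin rejS s ->
    feasible I (rcons s (false, (r, h))).

Definition maximal_feasible (I : instance) (s : seq event) : Prop :=
  feasible I s /\ forall e, ~ feasible I (rcons s e).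

(* a (fixed, arbitrary) maximal I-feasible sequence; all such sequences
   contain the same events, so prop/rej/tent of I do not depend on the choice *)
Definition max_seq (I : instance) : seq event :=
  epsilon (inhabits [::]) (maximal_feasible I).

Definition propI (I : instance) := propS (max_seq I).
Definition rejI (I : instance) := rejS (max_seq I).
Definition tentI (I : instance) := tentS (max_seq I).

Definition resident_minimal (I : instance) : Prop :=
  propI I = [set m : match_t | m.2 \in rlist I m.1].

Definition simple_extension (I J : instance) : Prop :=
  extension I J /\ (propI J :\: propI I) :&: (rejI J :\: rejI I) = set0.

Definition prescription (I : instance) (P X : {set match_t}) : Prop :=
  P :&: propI I = set0 /\
  (* P2 *) (forall r h h', (r, h) \in P -> (r, h') \in P -> h = h') /\
  X \subset tentI I /\
  (* P4 *) res P :&: res (tentI I) \subset res X /\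
  (* P5 *) (forall h, #|res_h (P :|: (tentI I :\: X)) h| <= quota I h /\
               (res_h X h != set0 -> #|res_h (P :|: (tentI I :\: X)) h| = quota I h)) /\
  (* P6 *) (forall h r r', r \in res_h (P :|: (tentI I :\: X)) h ->
               r' \in res_h X h -> precedes r r' (hlist I h)).

Definition tgs (P X : {set match_t}) : {set match_t} :=
  [set m in X | m.1 \notin res P].

End HR.

(* Main.v *)
Require Import Defs.
From mathcomp Require Import all_boot zify.
From Stdlib Require Import ClassicalEpsilon Classical.

Set Implicit Arguments.
Unset Strict Implicit.
Unset Printing Implicit Defensive.

Section Gen.
Variables (R H : finType).
Implicit Types (K : instance R H) (s t : seq (event R H)) (M N : {set match_t R H}) (r : R) (h : H).

Lemma propS_t s m : propS (rcons s (true, m)) = m |: propS s.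
Proof. by apply/setP => x; rewrite !inE mem_rcons in_cons xpair_eqE eqxx. Qed.
Lemma propS_f s m : propS (rcons s (false, m)) = propS s.
Proof. by apply/setP => x; rewrite !inE mem_rcons in_cons xpair_eqE. Qed.
Lemma rejS_t s m : rejS (rcons s (true, m)) = rejS s.
Proof. by apply/setP => x; rewrite !inE mem_rcons in_cons xpair_eqE. Qed.
Lemma rejS_f s m : rejS (rcons s (false, m)) = m |: rejS s.
Proof. by apply/setP => x; rewrite !inE mem_rcons in_cons xpair_eqE eqxx. Qed.

Lemma ousted_mono K M N r h : M \subset N -> ousted K M r h -> ousted K N r h.
Proof.
move=> MN /and3P[rM c1 c2]; apply/and3P; split.
- exact: (subsetP MN).
- apply: leq_trans c1 _; apply: sub_count => x; rewrite /res_h !inE; exact: (subsetP MN).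
- case/orP: c2 => [->//|c2]; apply/orP; right; apply: leq_trans c2 _; apply: sub_count => x;
  rewrite /res_h !inE; exact: (subsetP MN).
Qed.

Lemma ousted_mem K M r h : ousted K M r h -> (r, h) \in M.
Proof. by case/and3P. Qed.

Lemma feas_inv K s : feasible K s ->
  [/\ uniq s,
      forall r h, (r,h) \in propS s -> h \in rlist K r,
      forall r h, (r,h) \in rejS s -> ousted K (propS s) r h,
      forall r h h', (r,h) \in propS s -> precedes h' h (rlist K r) -> (r,h') \in rejS s &
      forall r h h', (r,h) \in propS s -> (r,h) \notin rejS s ->
                     (r,h') \in propS s -> (r,h') \notin rejS s -> h = h'].
Proof.
elim => [|s0 r h Hs [IU IL IO IP IT] rF rP hL pre|s0 r h Hs [IU IL IO IP IT] ou rR].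
- by split => // r h; rewrite inE.
- rewrite propS_t rejS_t; split.
  + by rewrite rcons_uniq IU andbT; move: rP; rewrite inE.
  + move=> r' h'; rewrite in_setU1 => /orP[/eqP[-> ->]//|]; exact: IL.
  + move=> r' h' /IO; apply: ousted_mono; exact: subsetUr.
  + move=> r' h1 h2; rewrite in_setU1 => /orP[/eqP[-> ->]|]; [exact: pre|exact: IP].
  + have nt : forall h', (r,h') \in propS s0 -> (r,h') \notin rejS s0 -> False.
      move=> h' p1 p2; case/negP: rF; apply/imsetP; exists (r,h') => //; by rewrite inE p2.
    move=> r' h1 h2; rewrite !in_setU1 => P1 N1 P2 N2.
    case/orP: P1 => [/eqP[e1 e2]|p1]; case/orP: P2 => [/eqP[e3 e4]|p2].
    * by rewrite e2 e4.
    * by subst; case: (nt _ p2 N2).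
    * by subst; case: (nt _ p1 N1).
    * exact: (IT _ _ _ p1 N1 p2 N2).
- rewrite propS_f rejS_f; split.
  + by rewrite rcons_uniq IU andbT; move: rR; rewrite inE.
  + exact: IL.
  + move=> r' h'; rewrite in_setU1 => /orP[/eqP[-> ->]//|]; exact: IO.
  + move=> r' h1 h2 p1 pr; rewrite in_setU1 (IP _ _ _ p1 pr) orbT //.
  + move=> r' h1 h2 p1; rewrite in_setU1 negb_or => /andP[_ n1] p2; rewrite in_setU1 negb_or => /andP[_ n2].
    exact: (IT _ _ _ p1 n1 p2 n2).
Qed.

Lemma rej_prop K s m : feasible K s -> m \in rejS s -> m \in propS s.
Proof. by case: m => r h /feas_inv[_ _ IO _ _] /IO /ousted_mem. Qed.

Lemma feas_size K s : feasible K s -> size s <= #|{: event R H}|.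
Proof.
case/feas_inv => U _ _ _ _; rewrite -(card_uniqP U); exact: max_card.
Qed.

Lemma max_exists K : exists t, maximal_feasible K t.
Proof.
suff: forall n s, #|{: event R H}| - size s <= n -> feasible K s -> exists t, maximal_feasible K t.
  by move/(_ _ [::] (leqnn _)); apply; constructor.
elim => [|n IH] s Hn Hs.
- exists s; split => // e He; have := feas_size He; rewrite size_rcons; move: Hn; lia.
- case: (classic (exists e, feasible K (rcons s e))) => [[e He]|ne].
  + apply: (IH (rcons s e)) He; rewrite size_rcons; move: Hn; lia.
  + exists s; split => // e He; apply: ne; by exists e.
Qed.


Lemma max_M1 K t r h : maximal_feasible K t -> ousted K (propS t) r h -> (r,h) \in rejS t.
Proof.
case=> Ht Hm ou; apply/negPn/negP => nr; apply: (Hm (false,(r,h))); exact: feas_rej.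
Qed.

Lemma max_M2 K t r h : maximal_feasible K t -> r \notin res (tentS t) ->
  h \in rlist K r -> (r,h) \in propS t.
Proof.
case=> Ht Hm rF hL.
suff: forall i, i < size (rlist K r) -> (r, nth h (rlist K r) i) \in propS t.
  by move/(_ (index h (rlist K r))); rewrite index_mem hL nth_index //; apply.
move=> i; elim/ltn_ind: i => i IH iL; apply/negPn/negP => np.
apply: (Hm (true,(r, nth h (rlist K r) i))); apply: feas_prop => //.
- exact: mem_nth.
- move=> h' /andP[h'L hi].
  have ji : index h' (rlist K r) < i by apply: leq_trans hi (index_nth _ _).
  have := IH _ ji; rewrite index_mem nth_index // => /(_ h'L) p'.
  apply/negPn/negP => nr; case/negP: rF; apply/imsetP; exists (r,h') => //.
  by rewrite inE nr.
Qed.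

Lemma feas_sub K s t : feasible K s -> maximal_feasible K t ->
  propS s \subset propS t /\ rejS s \subset rejS t.
Proof.
move=> Hs Mt; have Mt' := Mt; case: Mt' => Ht _.
case: (feas_inv Ht) => _ TL TO TP TT.
elim: Hs => [|s0 r h Hs [IP IR] rF rP hL pre|s0 r h Hs [IP IR] ou rR].
- by split; apply/subsetP => x; rewrite inE.
- rewrite propS_t rejS_t; split => //; rewrite subUset IP andbT sub1set.
  apply/negPn/negP => np.
  have : r \in res (tentS t).
    apply/negPn/negP => rF'; by rewrite (max_M2 Mt rF' hL) in np.
  case/imsetP => -[r2 h2] /[swap] /= <-; rewrite inE => /andP[n2 p2].
  have h2L := TL _ _ p2.
  case: (ltngtP (index h (rlist K r)) (index h2 (rlist K r))) => c.
  + have := TP _ _ h p2; rewrite /precedes hL c => /(_ erefl) /(rej_prop Ht).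
    by rewrite (negbTE np).
  + have : precedes h2 h (rlist K r) by rewrite /precedes h2L c.
    move/pre => /(subsetP IR); by rewrite (negbTE n2).
  + have e : h = h2 by rewrite -(nth_index h hL) c nth_index.
    by rewrite e p2 in np.
- rewrite propS_f rejS_f; split => //; rewrite subUset IR andbT sub1set.
  apply: (max_M1 Mt); apply: ousted_mono ou; exact: IP.
Qed.


Lemma max_seqP K : maximal_feasible K (max_seq K).
Proof. rewrite /max_seq; apply: epsilon_spec; exact: max_exists. Qed.

Lemma count_card (T : finType) (A : {set T}) (l : seq T) : uniq l ->
  count (fun x => x \in A) l = #|[set x in A | x \in l]|.
Proof.
move=> U; rewrite -size_filter -(card_uniqP (filter_uniq _ U)); apply: eq_card => x.
by rewrite mem_filter !inE andbC.
Qed.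

Lemma count_le_card (T : finType) (A : {set T}) (l : seq T) : uniq l ->
  count (fun x => x \in A) l <= #|A|.
Proof.
move=> U; rewrite count_card //; apply: subset_leq_card; apply/subsetP => x; rewrite inE.
by case/andP.
Qed.

Lemma count_take_le (T : eqType) (p : pred T) (l : seq T) n : count p (take n l) <= count p l.
Proof. by rewrite -{2}(cat_take_drop n l) count_cat leq_addr. Qed.

Lemma tent_card K t h : maximal_feasible K t -> (forall r, r \in hlist K h) ->
  uniq (hlist K h) -> #|res_h (tentS t) h| <= quota K h.
Proof.
move=> Mt Hc Hu; rewrite leqNgt; apply/negP => big.
set T := res_h (tentS t) h; set l := hlist K h.
have : T != set0 by rewrite -card_gt0 (leq_ltn_trans _ big).
case/set0Pn => y0 y0T.
case: (@arg_maxnP _ y0 (fun x => x \in T) (fun x => index x l) y0T) => y yT ymax.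
move: (yT); rewrite /T /res_h inE inE => /andP[yR yP].
have key : quota K h <= count (fun x => x \in res_h (propS t) h) (take (index y l) l).
  apply: leq_trans (_ : count (fun x => x \in T) (take (index y l) l) <= _); last first.
    apply: sub_count => x; rewrite /T /res_h !inE; by case/andP.
  rewrite count_card ?take_uniq //.
  apply: leq_trans (_ : #|T :\ y| <= _).
    by move: big; rewrite (cardsD1 y) yT add1n ltnS.
  apply: subset_leq_card; apply/subsetP => x; rewrite in_setD1 => /andP[xy xT]; rewrite inE xT /=.
  rewrite in_take ?Hc // ltn_neqAle; apply/andP; split; last exact: ymax.
  apply/negP => /eqP e; case/negP: xy; apply/eqP.
  by rewrite -(nth_index x (Hc x)) e nth_index ?Hc.
have : ousted K (propS t) y h.
  apply/and3P; split => //; last by rewrite key orbT.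
  exact: leq_trans key (count_take_le _ _ _).
by move/(max_M1 Mt); rewrite (negbTE yR).
Qed.

End Gen.

Section Main.
Variables (R H : finType) (I : instance R H) (P X : {set match_t R H}).

Definition extJ : instance R H :=
  Instance (quota I) (fun r => rlist I r ++ [seq h <- enum H | (r,h) \in P]) (hlist I).

Local Notation sI := (max_seq I).
Local Notation A := (propS (max_seq I)).
Local Notation RI := (rejS (max_seq I)).
Local Notation TI := (tentS (max_seq I)).
Local Notation t := (max_seq extJ).

Hypothesis VI : valid_instance I.
Hypothesis RM : propI I = [set m : match_t R H | m.2 \in rlist I m.1].
Hypothesis HC : hospital_complete I.
Hypothesis P1 : P :&: A = set0.
Hypothesis P2 : forall r h h', (r, h) \in P -> (r, h') \in P -> h = h'.
Hypothesis P3 : X \subset TI.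
Hypothesis P4 : res P :&: res TI \subset res X.
Hypothesis P5 : forall h, #|res_h (P :|: (TI :\: X)) h| <= quota I h /\
               (res_h X h != set0 -> #|res_h (P :|: (TI :\: X)) h| = quota I h).
Hypothesis P6 : forall h r r', r \in res_h (P :|: (TI :\: X)) h ->
               r' \in res_h X h -> precedes r r' (hlist I h).

Lemma inA r h : ((r,h) \in A) = (h \in rlist I r).
Proof. by move: RM; rewrite /propI => ->; rewrite inE. Qed.

Lemma PnA m : m \in P -> m \notin A.
Proof. move=> mP; apply/negP => mA; have : m \in P :&: A by rewrite inE mP. by rewrite P1 inE. Qed.

Lemma memJ r h : (h \in rlist extJ r) = (h \in rlist I r) || ((r,h) \in P).
Proof. by rewrite /= mem_cat mem_filter mem_enum andbT. Qed.

Lemma feasI : feasible I sI.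
Proof. by case: (max_seqP I). Qed.
Lemma maxJ : maximal_feasible extJ t.
Proof. exact: max_seqP. Qed.
Lemma feasJ : feasible extJ t.
Proof. by case: maxJ. Qed.

Lemma XA m : m \in X -> m \in A.
Proof. by move/(subsetP P3); rewrite inE => /andP[]. Qed.
Lemma RIA m : m \in RI -> m \in A.
Proof. exact: rej_prop feasI. Qed.

Lemma validJ : valid_instance extJ.
Proof.
case: VI => [Q [U1 U2]]; split => //; split => // r.
rewrite /= cat_uniq U1 filter_uniq ?enum_uniq // andbT /=.
apply/hasPn => h; rewrite mem_filter mem_enum andbT => /PnA; by rewrite inA.
Qed.

Lemma extJ_ext : extension I extJ.
Proof. split => //; split => [r|h]; first exact: prefix_prefix. by rewrite /= -[X in prefix _ X]cats0 prefix_prefix. Qed.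

Lemma transfer s : feasible I s -> feasible extJ s.
Proof.
elim => [|s0 r h Hs IH rF rP hL pre|s0 r h Hs IH ou rR]; first by constructor.
- apply: feas_prop => //; first by rewrite memJ hL.
  move=> h' /andP[h'L hi]; apply: pre; move: h'L hi; rewrite /= mem_cat !index_cat hL.
  case: (boolP (h' \in rlist I r)) => [h'I _ hi|_ _]; first by rewrite /precedes h'I.
  by rewrite ltnNge (leq_trans (ltnW _) (leq_addr _ _)) // index_mem.
- exact: feas_rej.
Qed.

Lemma subIJ : A \subset propS t /\ RI \subset rejS t.
Proof. exact: feas_sub (transfer feasI) maxJ. Qed.

Lemma propJ_sub m : m \in propS t -> (m \in A) || (m \in P).
Proof.
case: m => r h; case: (feas_inv feasJ) => _ L _ _ _ /L; by rewrite memJ inA.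
Qed.

Lemma res_hE (M : {set match_t R H}) h x : (x \in res_h M h) = ((x,h) \in M).
Proof. by rewrite /res_h in_set. Qed.

Lemma count_sub_in (T : eqType) (a1 a2 : pred T) (s : seq T) :
  (forall x, x \in s -> a1 x -> a2 x) -> count a1 s <= count a2 s.
Proof.
elim: s => //= x s IH Hs; rewrite leq_add //.
- by case a1x: (a1 x) => //=; rewrite (Hs x) ?mem_head.
- by apply: IH => y ys; apply: Hs; rewrite in_cons ys orbT.
Qed.

Lemma static r h : (r,h) \in A :|: P -> ousted I (A :|: P) r h -> (r,h) \in RI :|: X.
Proof.
move=> mem ou; apply/negPn/negP; rewrite in_setU negb_or => /andP[nR nX].
set T := res_h (P :|: (TI :\: X)) h; set l := hlist I h.
have Ul : uniq l by case: VI => _ [_]; apply.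
have rT : r \in T.
  rewrite /T /res_h in_set !in_setU in_setD in_setD nX nR /=.
  by move: mem; rewrite in_setU orbC.
have bound : forall k, k <= index r l -> count (fun x => x \in T) (take k l) < quota I h.
  move=> k kr; rewrite count_card ?take_uniq //.
  apply: (@leq_trans #|T|); last exact: (P5 h).1.
  rewrite (cardsD1 r T) rT add1n ltnS; apply: subset_leq_card; apply/subsetP => x.
  rewrite in_set => /andP[xT xk]; rewrite in_setD1 xT andbT; apply/negP => /eqP e.
  by move: xk; rewrite e in_take ?HC // ltnNge kr.
move: ou => /and3P[_ _]; rewrite /l (HC h r) /= => key.
case: (classic (exists z, ((z,h) \in RI) && (index z l < index r l))) => [[z0 Hz0]|nz].
- case: (@arg_minnP _ z0 (fun z => ((z,h) \in RI) && (index z l < index r l))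
          (fun z => index z l) Hz0) => z /andP[zR zi] zmin.
  have := (feas_inv feasI) => -[_ _ IO _ _].
  move: (IO _ _ zR) => /and3P[_ _]; rewrite (HC h z) /= => qz.
  have : count (fun x => x \in res_h A h) (take (index z l) l)
         <= count (fun x => x \in T) (take (index z l) l).
    apply: count_sub_in => x xk; rewrite /T !res_hE => xA.
    have xz := index_ltn xk.
    rewrite in_setU in_setD in_setD xA andbT.
    case: (boolP ((x,h) \in RI)) => xR.
      have := zmin x; rewrite xR /= (ltn_trans xz zi) => /(_ erefl).
      by rewrite leqNgt xz.
    case: (boolP ((x,h) \in X)) => xX; last by rewrite orbT.
    have : precedes r x l by apply: P6 => //; rewrite res_hE.
    case/andP => _ rx; have := ltn_trans rx (ltn_trans xz zi); by rewrite ltnn.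
  move=> c; have := bound (index z l) (ltnW zi).
  by rewrite ltnNge (leq_trans qz c).
- have : count (fun x => x \in res_h (A :|: P) h) (take (index r l) l)
         <= count (fun x => x \in T) (take (index r l) l).
    apply: count_sub_in => x xk; rewrite /T !res_hE => xAP.
    have xr := index_ltn xk.
    rewrite in_setU in_setD in_setD.
    move: xAP; rewrite in_setU => /orP[xA|->//].
    rewrite xA andbT.
    case: (boolP ((x,h) \in RI)) => xR.
      by case: nz; exists x; rewrite xR xr.
    case: (boolP ((x,h) \in X)) => xX; last by rewrite orbT.
    have : precedes r x l by apply: P6 => //; rewrite res_hE.
    case/andP => _ rx; have := ltn_trans rx xr; by rewrite ltnn.
  move=> c; have := bound (index r l) (leqnn _).
  by rewrite ltnNge (leq_trans key c).
Qed.

Lemma TIA m : m \in TI -> m \in A.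
Proof. by rewrite in_setD => /andP[]. Qed.
Lemma TInR m : m \in TI -> m \notin RI.
Proof. by rewrite in_setD => /andP[]. Qed.

Lemma rejJ_sub m : m \in rejS t -> m \in RI :|: X.
Proof.
case: m => r h; case: (feas_inv feasJ) => _ _ O _ _ /O ou.
apply: static.
- by rewrite in_setU; apply: propJ_sub; exact: ousted_mem ou.
- apply: ousted_mono ou; apply/subsetP => m /propJ_sub; by rewrite in_setU.
Qed.

Lemma card_res_disj (M N : {set match_t R H}) h : M :&: N = set0 ->
  #|res_h (M :|: N) h| = #|res_h M h| + #|res_h N h|.
Proof.
move=> D; rewrite -cardsUI.
have -> : res_h M h :&: res_h N h = set0.
  by apply/setP => x; rewrite in_setI !res_hE -in_setI D !in_set0.
have -> : res_h (M :|: N) h = res_h M h :|: res_h N h.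
  by apply/setP => x; rewrite in_setU !res_hE in_setU.
by rewrite cards0 addn0.
Qed.

Lemma per_hosp h : #|res_h (X :\: rejS t) h| <= #|res_h (P :\: propS t) h|.
Proof.
case: (boolP (res_h X h == set0)) => [/eqP X0|Xn].
  have S : res_h (X :\: rejS t) h \subset res_h X h.
    by apply/subsetP => x; rewrite !res_hE in_setD => /andP[].
  by rewrite (leq_trans (subset_leq_card S)) // X0 cards0.
set B := (TI :\: X) :|: (P :&: propS t).
have e1 : P :|: (TI :\: X) = B :|: (P :\: propS t).
  apply/setP => m; rewrite /B !in_setU in_setI in_setD.
  by case: (m \in P); case: (m \in propS t); rewrite ?orbT ?orbF ?andbT ?andbF.
have d1 : B :&: (P :\: propS t) = set0.
  apply/setP => m; rewrite in_set0 /B in_setI !in_setU in_setI !in_setD.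
  apply/negP => /andP[/orP[/andP[_ mT]|/andP[_ mJ]] /andP[nJ mP]].
  - have {}mT : m \in TI by rewrite in_setD.
    by move: (PnA mP); rewrite (TIA mT).
  - by rewrite mJ in nJ.
have d2 : B :&: (X :\: rejS t) = set0.
  apply/setP => m; rewrite in_set0 /B in_setI !in_setU in_setI !in_setD.
  apply/negP => /andP[/orP[/andP[nX _]|/andP[mP _]] /andP[_ mX]].
  - by rewrite mX in nX.
  - by move: (PnA mP); rewrite (XA mX).
have s2 : B :|: (X :\: rejS t) \subset tentS t.
  case: subIJ => sA sR.
  apply/subsetP => m; rewrite /B !in_setU in_setI !in_setD => H0.
  have [mJ nR] : m \in propS t /\ m \notin rejS t.
    case/orP: H0 => [/orP[/andP[nX mT]|/andP[mP mJ]]|/andP[nR mX]].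
    - have {}mT : m \in TI by rewrite in_setD.
      split; first exact: (subsetP sA _ (TIA mT)).
      apply/negP => /rejJ_sub; rewrite in_setU (negbTE (TInR mT)) /=.
      by rewrite (negbTE nX).
    - split => //; apply/negP => /rejJ_sub; rewrite in_setU => /orP[/RIA|/XA] mA;
      by move: (PnA mP); rewrite mA.
    - by split => //; exact: (subsetP sA _ (XA mX)).
  by rewrite nR mJ.
have q1 := (P5 h).2 Xn; rewrite e1 card_res_disj // in q1.
have Ul : uniq (hlist extJ h) by case: VI => _ [_]; apply.
have q2 := tent_card maxJ (HC h) Ul.
have c : #|res_h (B :|: (X :\: rejS t)) h| <= #|res_h (tentS t) h|.
  apply: subset_leq_card; apply/subsetP => x; rewrite !res_hE; exact: (subsetP s2).
rewrite card_res_disj // in c.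
rewrite -(leq_add2l #|res_h B h|) q1; exact: leq_trans c q2.
Qed.

Lemma card_sum_res (M : {set match_t R H}) : #|M| = \sum_h #|res_h M h|.
Proof.
rewrite -sum1_card (partition_big snd xpredT) //=.
apply: eq_bigr => h _; rewrite sum1_card.
transitivity #|(fun r => (r,h)) @: res_h M h|; last by rewrite card_imset // => x y [].
apply: eq_card => -[r h'] /=.
apply/idP/imsetP => [/andP[rM /eqP /= e]|[x xM [-> ->]]].
- by exists r; rewrite ?res_hE -?e.
- by apply/andP; rewrite -res_hE xM. 
Qed.

Lemma tgs_sub : tgs P X \subset rejS t.
Proof.
set U := P :\: propS t; set V := X :\: rejS t.
set Bs := [set m : match_t R H | m.1 \in res P].
have sumle : #|V| <= #|U|.
  by rewrite (card_sum_res V) (card_sum_res U); apply: leq_sum => h _; exact: per_hosp.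
have inj : #|res U| = #|U|.
  rewrite /res card_in_imset // => -[r h] [r' h'] /= mU mU' e; subst r'.
  move: mU mU'; rewrite !in_setD => /andP[_ mP] /andP[_ mP'].
  by rewrite (P2 mP mP').
have sub : res U \subset res (V :&: Bs).
  apply/subsetP => r /imsetP[[r1 h] mU /= e]; subst r1.
  move: mU; rewrite in_setD => /andP[nJ mP].
  have rT : r \in res (tentS t).
    apply/negPn/negP => rF.
    have hJ : h \in rlist extJ r by rewrite memJ mP orbT.
    by rewrite (max_M2 maxJ rF hJ) in nJ.
  case/imsetP: rT => [[r2 g] mT /= e]; subst r2.
  move: mT; rewrite in_setD => /andP[nR mJ].
  case/orP: (propJ_sub mJ) => [gA|gP]; last by move: mJ; rewrite (P2 gP mP) (negbTE nJ).
  have nRI : (r,g) \notin RI by apply/negP => /(subsetP subIJ.2); rewrite (negbTE nR).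
  have : r \in res X.
    apply: (subsetP P4); rewrite in_setI; apply/andP; split.
    - by apply/imsetP; exists (r,h).
    - by apply/imsetP; exists (r,g) => //; rewrite in_setD nRI gA.
  case/imsetP => [[r3 g'] mX /= e]; subst r3.
  have g'T := subsetP P3 _ mX.
  have eg : g = g'.
    case: (feas_inv feasI) => _ _ _ _ TT; apply: (TT _ _ _ gA nRI (TIA g'T) (TInR g'T)).
  subst g'; apply/imsetP; exists (r,g) => //.
  rewrite in_setI in_setD nR mX /= /Bs in_set /=.
  by apply/imsetP; exists (r,h).
have c1 : #|U| <= #|V :&: Bs|.
  by rewrite -inj; apply: leq_trans (subset_leq_card sub) (leq_imset_card _ _).
have := cardsID Bs V => e.
have : #|V :&: Bs| + #|V :\: Bs| <= #|V :&: Bs| + 0 by rewrite e addn0 (leq_trans sumle c1).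
rewrite leq_add2l leqn0.
rewrite cards_eq0 => /eqP V0.
apply/subsetP => m; rewrite /tgs in_set => /andP[mX mB]; apply/negPn/negP => nR.
have : m \in V :\: Bs by rewrite in_setD /Bs in_set mB in_setD nR mX.
by rewrite V0 in_set0.
Qed.

Lemma main_sec : exists J : instance R H,
    valid_instance J /\ simple_extension I J /\
    propI J :\: propI I \subset P /\
    rejI J :\: rejI I \subset X /\
    tgs P X \subset rejI J.
Proof.
exists extJ; rewrite /propI /rejI; split; first exact: validJ.
split; [split; first exact: extJ_ext|split; [|split]].
- rewrite /propI /rejI; apply/setP => m; rewrite in_set0; apply/negP.
  rewrite in_setI !in_setD => /andP[/andP[nA _] /andP[nR mR]].
  move: (rejJ_sub mR); rewrite in_setU (negbTE nR) /= => /XA.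
  by rewrite (negbTE nA).
- apply/subsetP => m; rewrite in_setD => /andP[nA mJ].
  by move: (propJ_sub mJ); rewrite (negbTE nA).
- apply/subsetP => m; rewrite in_setD => /andP[nR mR].
  by move: (rejJ_sub mR); rewrite in_setU (negbTE nR).
- exact: tgs_sub.
Qed.

End Main.

Theorem lemma1 (R H : finType) (I : instance R H) (P X : {set match_t R H}) :
  valid_instance I -> resident_minimal I -> hospital_complete I ->
  prescription I P X ->
  exists J : instance R H,
    valid_instance J /\ simple_extension I J /\
    propI J :\: propI I \subset P /\
    rejI J :\: rejI I \subset X /\
    tgs P X \subset rejI J.
Proof.
move=> VI RM HC [P1 [P2 [P3 [P4 [P5 P6]]]]].
by eapply main_sec; eassumption.
Qed.
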